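(* Let $d,a,b$ be positive integers, $r=(d+2b)/d$, $R=(a+d)/d$, with $R\ge3r$, and let $x_1$ be as in the context. Then $\rho:=x_1-r$ satisfies $\rho<\frac{r-1}{2}$.
   Context: For $t\in\mathbb C\setminus\{\pm1,\pm r\}$ let $\Phi(t)=d\log|t+r|-d\log|t-r|+(a+d)(\log|t-1|-\log|t+1|)$. Under $R\ge3r$ there is a unique $x_1\in(r,\infty)$ with $\Phi(x_1)=0$; moreover $\Phi>0$ on $(r,x_1)$ and $\Phi<0$ on $(x_1,\infty)$. *)

(* Defs.v *)
From Stdlib Require Import Reals Lra.
Open Scope R_scope.

Definition r_of (d b : nat) : R := (INR d + 2 * INR b) / INR d.
Definition R_of (d a : nat) : R := (INR a + INR d) / INR d.

(* Phi(t) = d log|t+r| - d log|t-r| + (a+d)(log|t-1| - log|t+1|),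
   restricted to real t (the statement only concerns t in (r, oo)). *)
Definition Phi (d a b : nat) (t : R) : R :=
  INR d * ln (Rabs (t + r_of d b)) - INR d * ln (Rabs (t - r_of d b))
  + (INR a + INR d) * (ln (Rabs (t - 1)) - ln (Rabs (t + 1))).

(* Main.v *)
Require Import Defs.
From Stdlib Require Import Reals Lra.
Open Scope R_scope.

Lemma ln_le_m1 (u : R) : 0 < u -> ln u <= u - 1.
Proof.
  intros Hu. rewrite <- (ln_exp (u-1)).
  destruct (Req_dec u (exp (u-1))) as [E|E].
  - rewrite <- E. lra.
  - left. apply ln_increasing; auto.
    pose proof (exp_ineq1_le (u-1)). lra.
Qed.

Lemma ln_lt_m1 (u : R) : 1 < u -> ln u < u - 1.
Proof.
  intros Hu. rewrite <- (ln_exp (u-1)).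
  apply ln_increasing; [lra|].
  pose proof (exp_ineq1 (u-1)). assert (u - 1 <> 0) by lra. specialize (H H0). lra.
Qed.

Lemma ln_mono (u v : R) : 0 < u -> u <= v -> ln u <= ln v.
Proof.
  intros Hu [H|H]. left; apply ln_increasing; auto. subst; lra.
Qed.

Lemma bern (x p : R) : 0 < x -> 1 < p -> ln (1 + p*x) < p * ln (1 + x).
Proof.
  intros Hx Hp.
  assert (E : 1 + p*x = (1+x) * ((1+p*x)/(1+x))) by (field; lra).
  assert (0 < p*x) by (apply Rmult_lt_0_compat; lra).
  assert (x < p*x) by (rewrite <- (Rmult_1_l x) at 1; apply Rmult_lt_compat_r; lra).
  rewrite E, ln_mult; [| lra | apply Rdiv_lt_0_compat; lra].
  assert (H1 : ln ((1+p*x)/(1+x)) < (1+p*x)/(1+x) - 1).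
  { apply ln_lt_m1. apply (Rmult_lt_reg_r (1+x)); [lra|].
    unfold Rdiv. rewrite Rmult_assoc, Rinv_l; lra. }
  assert (H2 : ln (/(1+x)) <= /(1+x) - 1).
  { apply ln_le_m1. apply Rinv_0_lt_compat; lra. }
  rewrite ln_Rinv in H2 by lra.
  assert (E2 : (1+p*x)/(1+x) - 1 = (p-1) * (1 - /(1+x))) by (field; lra).
  rewrite E2 in H1.
  assert ((p-1) * (1 - /(1+x)) <= (p-1) * ln (1+x)).
  { apply Rmult_le_compat_l; lra. }
  lra.
Qed.

Theorem lemma4p10 (d a b : nat) (hd : (0 < d)%nat) (ha : (0 < a)%nat) (hb : (0 < b)%nat)
  (hR : R_of d a >= 3 * r_of d b)
  (x1 : R) (hx1 : r_of d b < x1) (hPhi : Phi d a b x1 = 0) :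
  x1 - r_of d b < (r_of d b - 1) / 2.
Proof.
  assert (Hd : 0 < INR d) by (apply lt_0_INR; exact hd).
  assert (Hb : 0 < INR b) by (apply lt_0_INR; exact hb).
  assert (Ha : 0 < INR a) by (apply lt_0_INR; exact ha).
  unfold Phi in hPhi.
  set (r := r_of d b) in *. set (t := x1) in *.
  assert (Hr : 1 < r).
  { unfold r, r_of. apply (Rmult_lt_reg_r (INR d)); auto.
    unfold Rdiv. rewrite Rmult_assoc, Rinv_l; lra. }
  assert (HRe : INR a + INR d = INR d * R_of d a) by (unfold R_of; field; lra).
  set (RR := R_of d a) in *.
  apply Rnot_le_lt. intros Hc.
  rewrite (Rabs_pos_eq (t + r)) in hPhi by lra.
  rewrite (Rabs_pos_eq (t - r)) in hPhi by lra.
  rewrite (Rabs_pos_eq (t - 1)) in hPhi by lra.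
  rewrite (Rabs_pos_eq (t + 1)) in hPhi by lra.
  set (x := 2 / (t-1)). set (y := 2*r/(t-r)).
  assert (Hx : 0 < x) by (unfold x; apply Rdiv_lt_0_compat; lra).
  assert (Ey : t + r = (t - r) * (1 + y)) by (unfold y; field; lra).
  assert (Ex : t + 1 = (t - 1) * (1 + x)) by (unfold x; field; lra).
  assert (Hy : 0 < y) by (unfold y; apply Rdiv_lt_0_compat; lra).
  rewrite Ey, ln_mult in hPhi by lra.
  rewrite Ex, ln_mult in hPhi by lra.
  assert (Hyx : y <= (3*r) * x).
  { unfold x, y. unfold Rdiv.
    apply (Rmult_le_reg_r ((t-r)*(t-1))); [nra|].
    replace (2 * r * / (t - r) * ((t - r) * (t - 1))) with (2*r*(t-1)) by (field; lra).
    replace (3 * r * (2 * / (t - 1)) * ((t - r) * (t - 1))) with (6*r*(t-r)) by (field; lra).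
    nra. }
  assert (L1 : ln (1+y) <= ln (1 + 3*r*x)) by (apply ln_mono; lra).
  pose proof (bern x (3*r) Hx ltac:(lra)) as L2.
  assert (Lx : 0 < ln (1+x)).
  { rewrite <- ln_1. apply ln_increasing; lra. }
  assert (L3 : 3*r*ln(1+x) <= RR * ln (1+x)) by (apply Rmult_le_compat_r; lra).
  rewrite HRe in hPhi.
  assert (INR d * (ln (1+y) - RR * ln (1+x)) = 0) by (rewrite <- hPhi; ring).
  assert (INR d * (ln (1+y) - RR * ln (1+x)) < 0).
  { assert (ln (1+y) - RR * ln (1+x) < 0) by lra. nra. }
  lra.
Qed.
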